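(* The map $\mathcal{M}:X^{\mathrm{polar}}_{d-1,d}\to X_{d-1,d}$, $\mathcal{M}(\Delta K^\pm(\rho,\eta Q))=\rho^{-1}\eta Q$ ($\rho\in\mathrm{SO}_d(\mathbb{R})$, $\eta\in P$), is a well-defined homeomorphism.
   Context: $X_{d-1,d}=\mathrm{SL}_d(\mathbb{R})/Q$ (quotient topology) is the space of homothety classes of rank-$(d-1)$ discrete subgroups of $\mathbb{R}^d$, where $Q=\{\begin{pmatrix}\lambda\gamma&*\\0&1/\det(\lambda\gamma)\end{pmatrix}:\lambda\in\mathbb{R}^\times,\gamma\in\mathrm{GL}_{d-1}(\mathbb{Z})\}$ is the stabilizer of the class of $\mathrm{span}_\mathbb{Z}\{e_1,\dots,e_{d-1}\}$. $P=\{\begin{pmatrix}m&*\\0&1/\det m\end{pmatrix}:m\in\mathrm{GL}_{d-1}(\mathbb{R})\}\supseteq Q$. $K^\pm=P\cap\mathrm{SO}_d(\mathbb{R})$, $\Delta K^\pm=\{(k,k):k\in K^\pm\}\le\mathrm{SO}_d(\mathbb{R})\times P$, acting on $\mathrm{SO}_d(\mathbb{R})\times P/Q$ by left multiplication in both coordinates, and $X^{\mathrm{polar}}_{d-1,d}=\Delta K^\pm\backslash(\mathrm{SO}_d(\mathbb{R})\times P/Q)$ with the quotient topology. *)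

(* Defs.v *)
From HB Require Import structures.
From mathcomp Require Import all_boot all_order all_algebra.
From mathcomp Require Import all_classical all_reals all_analysis.
Unset Printing Implicit Defensive.
Import Order.TTheory GRing.Theory Num.Theory.
Import numFieldNormedType.Exports.
Local Open Scope classical_set_scope.
Local Open Scope ring_scope.

(* For an orbit map of a group action (e.g. g |-> gQ) this is
   exactly the orbit space with the quotient topology. *)
Definition quot {T : Type} (cls : T -> set T) : Type := set_type (range cls).

HB.instance Definition _ (T : Type) (cls : T -> set T) :=
  Choice.on (@quot T cls).

Definition qpi {T : Type} (cls : T -> set T) (x : T) : quot cls :=
  SigSub (mem_set (imageT cls x)).

Section QuotTop.
Context {T : topologicalType} (cls : T -> set T).
Definition quot_open (U : set (quot cls)) := open (qpi cls @^-1` U).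

Program Definition quot_topological_mixin :=
  @isOpenTopological.Build (quot cls) quot_open _ _ _.
Next Obligation. by rewrite /quot_open preimage_setT; exact: openT. Qed.
Next Obligation. by move=> ? ? ? ?; exact: openI. Qed.
Next Obligation. by move=> I f ofi; apply: bigcup_open => i _; exact: ofi. Qed.
HB.instance Definition _ := quot_topological_mixin.
End QuotTop.

Definition SLset (R : realType) (n : nat) : set ('M[R]_(n + 1)) :=
  [set g | \det g = 1].

Definition Qset (R : realType) (n : nat) : set ('M[R]_(n + 1)) :=
  [set g | exists (lam : R) (gam : 'M[int]_n) (b : 'M[R]_(n, 1)),
      [/\ lam != 0, gam \in unitmx &
       g = block_mx (lam *: map_mx (fun z : int => z%:~R : R) gam) b 0
             ((\det (lam *: map_mx (fun z : int => z%:~R : R) gam))^-1)%:M]].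

Definition Pset (R : realType) (n : nat) : set ('M[R]_(n + 1)) :=
  [set g | exists (m : 'M[R]_n) (b : 'M[R]_(n, 1)),
      m \in unitmx /\ g = block_mx m b 0 ((\det m)^-1)%:M].

Definition SOset (R : realType) (n : nat) : set ('M[R]_(n + 1)) :=
  [set k | k *m k^T = 1%:M /\ \det k = 1].

Definition Kset (R : realType) (n : nat) : set ('M[R]_(n + 1)) := Pset R n `&` SOset R n.

Notation SLt R n := (set_type (SLset R n)).
Notation Pt R n := (set_type (Pset R n)).
Notation SOt R n := (set_type (SOset R n)).

Definition cosetSL (R : realType) (n : nat) (g : SLt R n) : set (SLt R n) :=
  [set h | exists q, Qset R n q /\ val h = val g *m q].
Definition cosetP (R : realType) (n : nat) (eta : Pt R n) : set (Pt R n) :=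
  [set h | exists q, Qset R n q /\ val h = val eta *m q].

Notation Xspace R n := (quot (@cosetSL R n)).
Notation PQ R n := (quot (@cosetP R n)).

Definition lmulP {R : realType} {n : nat} (k : 'M[R]_(n + 1)) (A : set (Pt R n)) :
    set (Pt R n) :=
  [set h | exists2 e, A e & val h = k *m val e].

Definition polar_orbit (R : realType) (n : nat) (x : SOt R n * PQ R n) :
    set (SOt R n * PQ R n) :=
  [set y | exists k, [/\ Kset R n k, val y.1 = k *m val x.1 &
                         val y.2 = lmulP k (val x.2)]].

Notation Xpolar R n := (quot (@polar_orbit R n)).

(* Main.v *)
Require Import Defs.
From HB Require Import structures.
From mathcomp Require Import all_boot all_order all_algebra.
From mathcomp Require Import all_classical all_reals all_analysis.
From mathcomp Require Import perm ring lra.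
Import Order.TTheory GRing.Theory Num.Theory.
Import numFieldNormedType.Exports.
Local Open Scope classical_set_scope.
Local Open Scope ring_scope.

Section C.
Context {R : realType} {T : topologicalType} (x : T).
Definition cnt (f : T -> R) := f @ x --> f x.
Lemma catD f g : cnt f -> cnt g -> cnt (fun t => f t + g t).
Proof. move=> cf cg; exact: cvgD. Qed.
Lemma catM f g : cnt f -> cnt g -> cnt (fun t => f t * g t).
Proof. move=> cf cg; exact: cvgM. Qed.
Lemma catN f : cnt f -> cnt (fun t => - f t).
Proof. move=> cf; exact: cvgN. Qed.
Lemma catC c : cnt (fun _ => c).
Proof. exact: cvg_cst. Qed.
Lemma catV f : f x != 0 -> cnt f -> cnt (fun t => (f t)^-1).
Proof. move=> h cf; exact: cvgV. Qed.
Lemma catS f : cnt f -> cnt (fun t => Num.sqrt (f t)).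
Proof. move=> cf; exact: (continuous_comp cf (@sqrt_continuous R _)). Qed.
End C.
Section C2.
Context {R : realType} {T : topologicalType} (x : T).
Lemma cat_sum (I : Type) (r : seq I) (P : pred I) (F : I -> T -> R) :
  (forall i, cnt x (F i)) -> cnt x (fun t => \sum_(i <- r | P i) F i t).
Proof.
move=> hF; elim: r => [|i r IH].
  have -> : (fun t => \sum_(i <- [::] | P i) F i t) = fun _ => 0.
    by apply/funext => t; rewrite big_nil.
  exact: catC.
have -> : (fun t => \sum_(j <- i :: r | P j) F j t) =
   fun t => (if P i then F i t else 0) + \sum_(j <- r | P j) F j t.
  by apply/funext => t; rewrite big_cons; case: (P i); rewrite ?add0r.
apply: catD => //; case: (P i); [exact: hF | exact: catC].
Qed.
Lemma cat_prod (I : Type) (r : seq I) (P : pred I) (F : I -> T -> R) :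
  (forall i, cnt x (F i)) -> cnt x (fun t => \prod_(i <- r | P i) F i t).
Proof.
move=> hF; elim: r => [|i r IH].
  have -> : (fun t => \prod_(i <- [::] | P i) F i t) = fun _ => 1.
    by apply/funext => t; rewrite big_nil.
  exact: catC.
have -> : (fun t => \prod_(j <- i :: r | P j) F j t) =
   fun t => (if P i then F i t else 1) * \prod_(j <- r | P j) F j t.
  by apply/funext => t; rewrite big_cons; case: (P i); rewrite ?mul1r.
apply: catM => //; case: (P i); [exact: hF | exact: catC].
Qed.

Definition catm {m k} (F : T -> 'M[R]_(m, k)) := F @ x --> F x.

Lemma catmP {m k} (F : T -> 'M[R]_(m, k)) :
  (forall i j, cnt x (fun t => F t i j)) -> catm F.
Proof.
move=> h A [P hP sub].
have : \forall t \near x, forall i j, P i j (F t i j).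
  apply: filter_forall => i; apply: filter_forall => j.
  exact: (h i j (P i j) (hP i j)).
by apply: filterS => t ht; apply: sub.
Qed.

Lemma catmE {m k} (F : T -> 'M[R]_(m, k)) i j : catm F -> cnt x (fun t => F t i j).
Proof. move=> cF; exact: (continuous_comp cF (@coord_continuous R m k i j _)). Qed.
End C2.
Section C3.
Context {R : realType} {T : topologicalType} (x : T).
Local Notation cnt := (cnt x).
Local Notation catm := (catm x).

Lemma catm_mul {m k p} (F : T -> 'M[R]_(m, k)) (G : T -> 'M[R]_(k, p)) :
  catm F -> catm G -> catm (fun t => F t *m G t).
Proof.
move=> cF cG; apply: catmP => i j.
have -> : (fun t => (F t *m G t) i j) = fun t => \sum_l F t i l * G t l j.
  by apply/funext => t; rewrite mxE.
by apply: cat_sum => l; apply: catM; apply: catmE.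
Qed.

Lemma catm_add {m k} (F G : T -> 'M[R]_(m, k)) :
  catm F -> catm G -> catm (fun t => F t + G t).
Proof.
move=> cF cG; apply: catmP => i j.
have -> : (fun t => (F t + G t) i j) = fun t => F t i j + G t i j.
  by apply/funext => t; rewrite mxE.
by apply: catD; apply: catmE.
Qed.

Lemma catm_opp {m k} (F : T -> 'M[R]_(m, k)) : catm F -> catm (fun t => - F t).
Proof.
move=> cF; apply: catmP => i j.
have -> : (fun t => (- F t) i j) = fun t => - F t i j.
  by apply/funext => t; rewrite mxE.
by apply: catN; apply: catmE.
Qed.

Lemma catm_scale {m k} (c : T -> R) (F : T -> 'M[R]_(m, k)) :
  cnt c -> catm F -> catm (fun t => c t *: F t).
Proof.
move=> cc cF; apply: catmP => i j.
have -> : (fun t => (c t *: F t) i j) = fun t => c t * F t i j.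
  by apply/funext => t; rewrite mxE.
by apply: catM => //; apply: catmE.
Qed.

Lemma catm_cst {m k} (A : 'M[R]_(m, k)) : catm (fun _ => A).
Proof. exact: cvg_cst. Qed.

Lemma catm_tr {m k} (F : T -> 'M[R]_(m, k)) : catm F -> catm (fun t => (F t)^T).
Proof.
move=> cF; apply: catmP => i j.
have -> : (fun t => (F t)^T i j) = fun t => F t j i.
  by apply/funext => t; rewrite mxE.
exact: catmE.
Qed.

Lemma catm_row {m k} (i0 : 'I_m) (F : T -> 'M[R]_(m, k)) : catm F -> catm (fun t => row i0 (F t)).
Proof.
move=> cF; apply: catmP => i j.
have -> : (fun t => (row i0 (F t)) i j) = fun t => F t i0 j.
  by apply/funext => t; rewrite mxE.
exact: catmE.
Qed.

Lemma cat_det {k} (F : T -> 'M[R]_k) : catm F -> cnt (fun t => \det (F t)).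
Proof.
move=> cF.
have -> : (fun t => \det (F t)) = fun t => \sum_(s : 'S_k) ((-1) ^+ s * \prod_i F t i (s i)).
  by apply/funext => t; rewrite /determinant.
apply: cat_sum => s; apply: catM; first exact: catC.
by apply: cat_prod => i; apply: catmE.
Qed.

Lemma catm_adj {k} (F : T -> 'M[R]_k) : catm F -> catm (fun t => \adj (F t)).
Proof.
move=> cF; apply: catmP => i j.
have -> : (fun t => (\adj (F t)) i j) = fun t => (-1) ^+ (j + i) * \det (row' j (col' i (F t))).
  by apply/funext => t; rewrite mxE /cofactor.
apply: catM; first exact: catC.
apply: cat_det; apply: catmP => a b.
have -> : (fun t => (row' j (col' i (F t))) a b) = fun t => F t (lift j a) (lift i b).
  by apply/funext => t; rewrite !mxE.
exact: catmE.
Qed.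

Lemma catm_diag {k} (F : T -> 'rV[R]_k) : catm F -> catm (fun t => diag_mx (F t)).
Proof.
move=> cF; apply: catmP => i j.
have -> : (fun t => (diag_mx (F t)) i j) = fun t => F t 0 i *+ (i == j).
  by apply/funext => t; rewrite mxE.
case: (i == j); last exact: catC.
exact: catmE.
Qed.
End C3.

Set Implicit Arguments.
Unset Strict Implicit.
Section Q.
Context {T : Type} (cls : T -> set T).

Definition rep (X : quot cls) : T := s2val (cid2 (set_valP X)).

Lemma rep_cls X : cls (rep X) = val X.
Proof. by rewrite /rep; case: cid2. Qed.

Lemma qpi_rep X : qpi cls (rep X) = X.
Proof. by apply: val_inj; rewrite /= rep_cls. Qed.

Lemma qpi_val x : val (qpi cls x) = cls x.
Proof. by []. Qed.

Hypothesis refl : forall x, cls x x.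
Hypothesis clos : forall x y, cls x y -> cls y = cls x.

Lemma qpi_eq x y : cls x y -> qpi cls y = qpi cls x.
Proof. by move=> h; apply: val_inj; rewrite /= (clos h). Qed.

Lemma qpi_inv x y : qpi cls x = qpi cls y -> cls x y.
Proof. by move=> /(congr1 val) /= ->; exact: refl. Qed.
End Q.

Section QT.
Context {T : topologicalType} (cls : T -> set T).

Lemma qpi_cont : continuous (qpi cls).
Proof. by apply/continuousP => U oU; exact: oU. Qed.

Lemma quot_contP {Y : topologicalType} (F : quot cls -> Y) :
  continuous (F \o qpi cls) -> continuous F.
Proof. by move=> /continuousP h; apply/continuousP => U oU; exact: h. Qed.
End QT.

Section Alg.
Context (R : realType) (n : nat).
Local Notation M := 'M[R]_(n + 1).

Lemma det_blk (m : 'M[R]_n) (b : 'M[R]_(n,1)) (c : 'M[R]_1) :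
  \det (block_mx m b 0 c) = \det m * c 0 0.
Proof. by rewrite det_ublock det_mx11. Qed.

Lemma Pset_iff (g : M) : Pset R n g <-> \det g = 1 /\ dlsubmx g = 0.
Proof.
split.
  move=> [m [b [um ->]]]; rewrite det_ublock det_mx11 block_mxKdl mxE eqxx mulr1n.
  by rewrite mulfV // -unitfE -unitmxE.
move=> [dg dl]; exists (ulsubmx g), (ursubmx g).
have e : \det (ulsubmx g) * (drsubmx g) 0 0 = 1 by rewrite -(det_blk _ (ursubmx g)) -dl submxK.
have uc : \det (ulsubmx g) != 0.
  by apply/eqP => h; move: e; rewrite h mul0r => /eqP; rewrite eq_sym oner_eq0.
split; first by rewrite unitmxE unitfE.
rewrite -{1}[g]submxK dl; congr block_mx.
rewrite [drsubmx g]mx11_scalar; congr scalar_mx.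
by apply: (mulfI uc); rewrite e mulfV.
Qed.

Lemma P_mul a b : Pset R n a -> Pset R n b -> Pset R n (a *m b).
Proof.
move=> /Pset_iff [da la] /Pset_iff [db lb]; apply/Pset_iff; split.
  by rewrite det_mulmx da db mulr1.
by rewrite -[a]submxK -[b]submxK la lb mulmx_block block_mxKdl !mul0mx mulmx0 addr0.
Qed.

Lemma P_cancel a b : Pset R n (a *m b) -> Pset R n b -> \det a = 1 -> Pset R n a.
Proof.
move=> /Pset_iff [_ lab] hb da; apply/Pset_iff; split => //.
move: hb => [m [bb [um eb]]].
have : dlsubmx a *m m = 0.
  by move: lab; rewrite eb -{1}[a]submxK mulmx_block block_mxKdl mulmx0 addr0.
by move/(congr1 (mulmx^~ (invmx m))); rewrite -mulmxA mulmxV // mulmx1 mul0mx.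
Qed.

Lemma SO_unit k : SOset R n k -> k \in unitmx.
Proof. by move=> [_ d]; rewrite unitmxE d unitr1. Qed.

Lemma SO_inv k : SOset R n k -> invmx k = k^T.
Proof.
move=> hk; have [e _] := hk.
by rewrite -[k^T]mul1mx -(mulVmx (SO_unit hk)) -mulmxA e mulmx1.
Qed.

Lemma SO_trK k : SOset R n k -> k^T *m k = 1%:M.
Proof. by move=> hk; rewrite -SO_inv // mulVmx // SO_unit. Qed.

Lemma SO_mul a b : SOset R n a -> SOset R n b -> SOset R n (a *m b).
Proof.
move=> [ea da] [eb db]; split; last by rewrite det_mulmx da db mulr1.
by rewrite trmx_mul mulmxA -(mulmxA a) eb mulmx1 ea.
Qed.

Lemma SO_tr a : SOset R n a -> SOset R n a^T.
Proof. by move=> ha; split; [rewrite trmxK SO_trK | rewrite det_tr; case: ha]. Qed.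

Lemma SO_1 : SOset R n 1%:M.
Proof. by split; [rewrite trmx1 mulmx1 | rewrite det1]. Qed.

Lemma P_1 : Pset R n 1%:M.
Proof. by apply/Pset_iff; rewrite det1 (scalar_mx_block n 1) block_mxKdl. Qed.

Lemma K_tr k : Kset R n k -> Kset R n k^T.
Proof.
move=> [kP kS]; split; last exact: SO_tr.
apply: (P_cancel (b := k)) => //; first by rewrite SO_trK //; exact: P_1.
by rewrite det_tr; case: kS.
Qed.


Local Notation iR := (map_mx (fun z : int => z%:~R : R)).

Lemma Q_1 : Qset R n 1%:M.
Proof.
exists 1, 1%:M, 0; split; rewrite ?oner_eq0 ?unitmx1 //.
by rewrite map_mx1 scale1r det1 invr1 (scalar_mx_block n 1).
Qed.

Lemma Q_mul a b : Qset R n a -> Qset R n b -> Qset R n (a *m b).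
Proof.
move=> [l1 [g1 [b1 [l10 u1 ->]]]] [l2 [g2 [b2 [l20 u2 ->]]]].
set A1 := l1 *: iR g1; set A2 := l2 *: iR g2.
have hA : A1 *m A2 = (l1 * l2) *: iR (g1 *m g2).
  by rewrite /A1 /A2 -scalemxAl -scalemxAr scalerA map_mxM.
exists (l1 * l2), (g1 *m g2), (A1 *m b2 + b1 *m (\det A2)^-1%:M); split.
- by rewrite mulf_neq0.
- by rewrite unitmx_mul u1 u2.
rewrite mulmx_block !mulmx0 !mul0mx !addr0 !add0r -hA; congr block_mx.
by rewrite det_mulmx invfM scalar_mxM.
Qed.

Lemma Q_inv a : Qset R n a -> exists a', Qset R n a' /\ a *m a' = 1%:M.
Proof.
move=> [l1 [g1 [b1 [l10 u1 ->]]]].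
set A1 := l1 *: iR g1; set A2 := l1^-1 *: iR (invmx g1).
have hA : A1 *m A2 = 1%:M.
  by rewrite /A1 /A2 -scalemxAl -scalemxAr scalerA -map_mxM mulmxV // map_mx1 mulfV // scale1r.
exists (block_mx A2 (- (A2 *m b1 *m (\det A2)^-1%:M)) 0 (\det A2)^-1%:M); split.
  exists l1^-1, (invmx g1), (- (A2 *m b1 *m (\det A2)^-1%:M)); split => //.
  - by rewrite invr_eq0.
  - by rewrite unitmx_inv.
rewrite mulmx_block !mulmx0 !mul0mx !addr0 !add0r hA.
rewrite mulmxN !mulmxA hA mul1mx addNr -scalar_mxM -invfM -det_mulmx hA det1 invr1.
by rewrite -(scalar_mx_block n 1).
Qed.

Lemma Q_P q : Qset R n q -> Pset R n q.
Proof.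
move=> hq; have [q' [_ e]] := Q_inv hq.
move: hq => [l1 [g1 [b1 [l10 u1 eq]]]].
have uq : q \in unitmx by case: (mulmx1_unit e).
exists (l1 *: iR g1), b1; split => //.
move: uq; rewrite eq unitmxE det_ublock unitrM => /andP [].
by rewrite unitmxE.
Qed.


Definition cosetG (A : set 'M[R]_(n + 1)) (g : set_type A) : set (set_type A) :=
  [set h | exists q, Qset R n q /\ val h = val g *m q].

Lemma cosetG_refl A g : @cosetG A g g.
Proof. by exists 1%:M; split; [exact: Q_1 | rewrite mulmx1]. Qed.

Lemma cosetG_clos A x y : @cosetG A x y -> @cosetG A y = @cosetG A x.
Proof.
move=> [q [hq ey]]; have [q' [hq' e]] := Q_inv hq.
apply/funext => h; apply/propext; rewrite /cosetG /=; split.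
  move=> [q2 [hq2 ->]]; exists (q *m q2); split; first exact: Q_mul.
  by rewrite ey mulmxA.
move=> [q2 [hq2 ->]]; exists (q' *m q2); split; first exact: Q_mul.
by rewrite ey -mulmxA (mulmxA q) e mul1mx.
Qed.

Lemma lmulP1 (A : set (Pt R n)) : lmulP 1%:M A = A.
Proof.
apply/funext => h; apply/propext; rewrite /lmulP /=; split.
  by move=> [e Ae]; rewrite mul1mx => /val_inj ->.
by move=> Ah; exists h => //; rewrite mul1mx.
Qed.

Lemma lmulP_comp a b (A : set (Pt R n)) : Pset R n b ->
  lmulP a (lmulP b A) = lmulP (a *m b) A.
Proof.
move=> hb; apply/funext => h; apply/propext; rewrite /lmulP /=; split.
  by move=> [e [e' Ae' ->] ->]; exists e' => //; rewrite mulmxA.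
move=> [e Ae ->].
have he : Pset R n (b *m val e) by apply: P_mul => //; exact: set_valP.
exists (SigSub (mem_set he)); first by exists e.
by rewrite /= mulmxA.
Qed.

Lemma K_mul a b : Kset R n a -> Kset R n b -> Kset R n (a *m b).
Proof. by move=> [pa sa] [pb sb]; split; [exact: P_mul | exact: SO_mul]. Qed.

Lemma K_1 : Kset R n 1%:M.
Proof. by split; [exact: P_1 | exact: SO_1]. Qed.

Lemma orb_refl x : polar_orbit R n x x.
Proof. by exists 1%:M; split; rewrite ?mul1mx ?lmulP1 //; exact: K_1. Qed.

Lemma orb_clos x y : polar_orbit R n x y -> polar_orbit R n y = polar_orbit R n x.
Proof.
move=> [k [hk e1 e2]]; have [kP kS] := hk.
apply/funext => z; apply/propext; split.
  move=> [k' [hk' f1 f2]]; exists (k' *m k); split; first exact: K_mul.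
    by rewrite f1 e1 mulmxA.
  by rewrite f2 e2 lmulP_comp.
move=> [k' [hk' f1 f2]]; exists (k' *m k^T); split.
- by apply: K_mul => //; exact: K_tr.
- by rewrite f1 e1 -mulmxA (mulmxA k^T) SO_trK // mul1mx.
- rewrite f2 e2 lmulP_comp; last by case: (K_tr hk).
  by rewrite -mulmxA SO_trK // mulmx1.
Qed.

End Alg.

Section HH.
Context (R : realType) (n : nat).
Local Notation M := 'M[R]_(n + 1).
Definition lst : 'I_(n + 1) := rshift n (ord0 : 'I_1).
Definition ee : 'rV[R]_(n + 1) := delta_mx 0 lst.

Definition hw (s : R) (u : 'rV[R]_(n + 1)) := u - s *: ee.
Definition ha (s : R) u := (hw s u *m (hw s u)^T) 0 0.
Definition hH (s : R) u : M := 1%:M - (2 / ha s u) *: ((hw s u)^T *m hw s u).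

Lemma hH_tr s u : (hH s u)^T = hH s u.
Proof. by rewrite /hH linearB /= linearZ /= trmx_mul trmxK trmx1. Qed.

Lemma ww s u : hw s u *m (hw s u)^T = (ha s u)%:M.
Proof. by rewrite {1}[hw s u *m _]mx11_scalar. Qed.

Lemma hH_sq s u : ha s u != 0 -> hH s u *m hH s u = 1%:M.
Proof.
move=> a0; rewrite /hH.
set P := (hw s u)^T *m hw s u; set c := (2 / ha s u).
have PP : P *m P = ha s u *: P.
  by rewrite /P mulmxA -(mulmxA (hw s u)^T) ww mul_mx_scalar -scalemxAl.
rewrite mulmxBl mul1mx mulmxBr mulmx1 -scalemxAl -scalemxAr PP !scalerA.
have -> : c * c * ha s u = c + c.
  by rewrite /c; field.
by rewrite scalerDl opprB addrK subrK.
Qed.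

Lemma mx11E (A : 'M[R]_1) : A = (A 0 0)%:M.
Proof. exact: mx11_scalar. Qed.

Lemma ueT (u : 'rV[R]_(n + 1)) : u *m ee^T = (u 0 lst)%:M.
Proof. by rewrite [LHS]mx11E /ee trmx_delta -colE mxE. Qed.

Lemma euT (u : 'rV[R]_(n + 1)) : ee *m u^T = (u 0 lst)%:M.
Proof. by rewrite [LHS]mx11E /ee -rowE !mxE. Qed.

Lemma eeT : ee *m ee^T = 1%:M.
Proof. by rewrite /ee trmx_delta mul_delta_mx [LHS]mx11E mxE !eqxx. Qed.

Lemma ee_lst : ee 0 lst = 1.
Proof. by rewrite /ee mxE !eqxx. Qed.

Lemma ha_eq s u : u *m u^T = 1%:M -> s ^+ 2 = 1 -> ha s u = 2 - 2 * s * u 0 lst.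
Proof.
move=> uu s2; rewrite /ha /hw.
have -> : (u - s *: ee)^T = u^T - s *: ee^T by rewrite linearB /= linearZ.
rewrite mulmxBl !mulmxBr.
rewrite -!scalemxAl -!scalemxAr uu ueT euT eeT scalerA.
rewrite !mxE !eqxx /= !mulr1n -expr2 s2 mulr1.
by ring.
Qed.

Lemma hH_row s u : u *m u^T = 1%:M -> s ^+ 2 = 1 -> ha s u != 0 ->
  row lst (hH s u) = s *: u.
Proof.
move=> uu s2 a0; rewrite rowE -/ee /hH mulmxBr mulmx1 -scalemxAr mulmxA.
have -> : ee *m (hw s u)^T = (hw s u 0 lst)%:M by rewrite euT.
rewrite mul_scalar_mx scalerA.
have -> : 2 / ha s u * hw s u 0 lst = - s.
  have a0' := a0; rewrite ha_eq // in a0'.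
  rewrite ha_eq // /hw !mxE !eqxx /= mulr1.
  apply: (mulIf a0'); rewrite mulrAC divfK //.
  apply/eqP; rewrite -subr_eq0; apply/eqP.
  have -> : 2 * (u 0 lst - s) - - s * (2 - 2 * s * u 0 lst) = 2 * u 0 lst * (1 - s ^+ 2) by ring.
  by rewrite s2 subrr mulr0.
by rewrite scaleNr opprK /hw scalerBr scalerA -expr2 s2 scale1r addrC subrK.
Qed.


Definition Dm (d : R) : M := diag_mx (\row_j (if j == lst then d else 1)).

Lemma Dm_tr d : (Dm d)^T = Dm d.
Proof. exact: tr_diag_mx. Qed.

Lemma Dm_sq d : d ^+ 2 = 1 -> Dm d *m Dm d = 1%:M.
Proof.
move=> d2; rewrite mulmx_diag -diag_const_mx; congr diag_mx.
by apply/rowP => j; rewrite !mxE; case: ifP => _; [rewrite -expr2 d2 | rewrite mulr1].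
Qed.

Lemma det_Dm d : \det (Dm d) = d.
Proof.
rewrite det_diag (bigD1 lst) //= big1 ?mulr1; first by rewrite mxE eqxx.
by move=> i /negPf ni; rewrite mxE ni.
Qed.

Lemma row_Dm d (X : M) : row lst (Dm d *m X) = d *: row lst X.
Proof. by apply/rowP => j; rewrite mul_diag_mx !mxE eqxx. Qed.

Definition rho s u : M := Dm (\det (hH s u)) *m hH s u.

Lemma rho_SO s u : ha s u != 0 -> SOset R n (rho s u).
Proof.
move=> a0; have HH := hH_sq a0.
have d2 : \det (hH s u) ^+ 2 = 1 by rewrite expr2 -det_mulmx HH det1.
split; last by rewrite det_mulmx det_Dm -expr2.
rewrite /rho trmx_mul Dm_tr hH_tr -!mulmxA (mulmxA (hH s u)) HH mul1mx.
exact: Dm_sq.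
Qed.

Lemma rho_row s u : u *m u^T = 1%:M -> s ^+ 2 = 1 -> ha s u != 0 ->
  row lst (rho s u) = (\det (hH s u) * s) *: u.
Proof. by move=> uu s2 a0; rewrite /rho row_Dm hH_row // scalerA. Qed.

Definition vv (g : M) : 'rV[R]_(n + 1) := row lst (\adj g).
Definition nn (g : M) : R := Num.sqrt ((vv g *m (vv g)^T) 0 0).
Definition uu (g : M) : 'rV[R]_(n + 1) := (nn g)^-1 *: vv g.

Lemma vv_mul g : \det g = 1 -> vv g *m g = ee.
Proof. by move=> dg; rewrite /vv -row_mul mul_adj_mx dg rowE mulmx1. Qed.

Lemma ee_neq0 : ee != 0.
Proof. by apply/eqP => /rowP /(_ lst); rewrite ee_lst mxE; apply/eqP; rewrite oner_eq0. Qed.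

Lemma vvT_sum k (v : 'rV[R]_k) : (v *m v^T) 0 0 = \sum_j v 0 j ^+ 2.
Proof.
rewrite mxE; apply: eq_bigr => j _.
have -> : v^T j 0 = v 0 j by rewrite mxE.
by rewrite expr2.
Qed.

Lemma vv_pos g : \det g = 1 -> 0 < (vv g *m (vv g)^T) 0 0.
Proof.
move=> dg; rewrite vvT_sum.
have ge : 0 <= \sum_j vv g 0 j ^+ 2 by apply: sumr_ge0 => j _; exact: sqr_ge0.
rewrite lt_def ge andbT; apply/eqP => h.
have v0 : vv g = 0.
  apply/rowP => j.
  move: h => /psumr_eq0P h'.
  have := h' (fun i _ => sqr_ge0 (vv g 0 i)) j isT => /eqP; rewrite sqrf_eq0 => /eqP ->.
  by rewrite mxE.
by move: ee_neq0; rewrite -(vv_mul dg) v0 mul0mx eqxx.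
Qed.

Lemma uu_norm g : \det g = 1 -> uu g *m (uu g)^T = 1%:M.
Proof.
move=> dg; have hp := vv_pos dg.
rewrite /uu linearZ /= -scalemxAl -scalemxAr scalerA [_ *m _]mx11E.
rewrite -mul_scalar_mx -scalar_mxM; congr scalar_mx.
have np : 0 < nn g by rewrite /nn sqrtr_gt0.
rewrite -invfM -expr2 /nn sqr_sqrtr ?ltW // mulVf //.
by rewrite gt_eqF.
Qed.

Definition rhog s (g : M) : M := rho s (uu g).

Lemma rhog_SO s g : ha s (uu g) != 0 -> SOset R n (rhog s g).
Proof. exact: rho_SO. Qed.

Lemma rhog_P s g : \det g = 1 -> s ^+ 2 = 1 -> ha s (uu g) != 0 ->
  Pset R n (rhog s g *m g).
Proof.
move=> dg s2 a0; apply/Pset_iff; split.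
  by rewrite det_mulmx dg mulr1; case: (rhog_SO a0).
have hr : row lst (rhog s g *m g) = (\det (hH s (uu g)) * s / nn g) *: ee.
  by rewrite row_mul /rhog rho_row ?uu_norm // /uu scalerA -scalemxAl vv_mul.
apply/matrixP => i j; rewrite (ord1 i).
transitivity ((row lst (rhog s g *m g)) 0 (lshift 1 j)); first by rewrite !mxE.
by rewrite hr !mxE /lst eq_lrshift andbF mulr0.
Qed.

End HH.

Section Main.
Context (R : realType) (n : nat).
Local Notation M := 'M[R]_(n + 1).

Definition sub_or (A : set M) (d : set_type A) (g : M) : set_type A :=
  match pselect (A g) with left h => SigSub (mem_set h) | right _ => d end.

Lemma sub_orE A d g : A g -> val (@sub_or A d g) = g.
Proof. by rewrite /sub_or; case: pselect. Qed.

Definition SL1 : SLt R n := SigSub (mem_set (det1 _ (n + 1) : SLset R n 1%:M)).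
Definition P1 : Pt R n := SigSub (mem_set (P_1 R n)).
Definition SO1 : SOt R n := SigSub (mem_set (SO_1 R n)).
Definition toSL := @sub_or (SLset R n) SL1.
Definition toP := @sub_or (Pset R n) P1.
Definition toSO := @sub_or (SOset R n) SO1.

Local Notation qSL := (qpi (@cosetSL R n)).
Local Notation qP := (qpi (@cosetP R n)).
Local Notation qO := (qpi (@polar_orbit R n)).

Lemma SL_refl x : cosetSL R n x x. Proof. exact: cosetG_refl. Qed.
Lemma SL_clos x y : cosetSL R n x y -> cosetSL R n y = cosetSL R n x. Proof. exact: cosetG_clos. Qed.
Lemma Pc_refl x : cosetP R n x x. Proof. exact: cosetG_refl. Qed.
Lemma Pc_clos x y : cosetP R n x y -> cosetP R n y = cosetP R n x. Proof. exact: cosetG_clos. Qed.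

Lemma detQ q : Qset R n q -> \det q = 1.
Proof. by move=> /Q_P /Pset_iff []. Qed.
Lemma detP q : Pset R n q -> \det q = 1.
Proof. by move=> /Pset_iff []. Qed.
Lemma detSO q : SOset R n q -> \det q = 1.
Proof. by case. Qed.

Definition sgn (g : M) : R := if uu g 0 (lst n) < 0 then 1 else -1.

Lemma sgn2 g : sgn g ^+ 2 = 1.
Proof. by rewrite /sgn; case: ifP; rewrite ?expr1n // sqrrN expr1n. Qed.

Lemma ha_sgn g : \det g = 1 -> 0 < ha (sgn g) (uu g).
Proof.
move=> dg; rewrite ha_eq ?uu_norm ?sgn2 //.
rewrite /sgn; case: ifP => h; first by rewrite mulr1 subr_gt0; lra.
rewrite mulrN1 mulNr opprK; rewrite ltNge in h; move/negbFE: h => h; lra.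
Qed.

Local Notation rO := (@rep _ (@polar_orbit R n)).
Local Notation rP := (@rep _ (@cosetP R n)).
Local Notation rSL := (@rep _ (@cosetSL R n)).

Definition Mmap (X : Xpolar R n) : Xspace R n :=
  qSL (toSL ((val (rO X).1)^T *m val (rP (rO X).2))).

Definition Phi (s : R) (g : M) : Xpolar R n :=
  qO (toSO (rhog s g), qP (toP (rhog s g *m g))).

Definition Minv (Y : Xspace R n) : Xpolar R n :=
  let g := val (rSL Y) in Phi (sgn g) g.


Lemma toP_val g : Pset R n g -> val (toP g) = g.
Proof. exact: sub_orE. Qed.
Lemma toSL_val g : SLset R n g -> val (toSL g) = g.
Proof. exact: sub_orE. Qed.
Lemma toSO_val g : SOset R n g -> val (toSO g) = g.
Proof. exact: sub_orE. Qed.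

Lemma PtP (e : Pt R n) : Pset R n (val e). Proof. exact: set_valP. Qed.
Lemma SOtP (e : SOt R n) : SOset R n (val e). Proof. exact: set_valP. Qed.
Lemma SLtP (e : SLt R n) : SLset R n (val e). Proof. exact: set_valP. Qed.

Lemma coset_lmul k (e e' : Pt R n) q : Pset R n k -> Qset R n q ->
  val e' = k *m val e *m q -> cosetP R n e' = lmulP k (cosetP R n e).
Proof.
move=> hk hq ee'; have [q' [hq' qq']] := Q_inv hq.
apply/funext => h; apply/propext; rewrite /cosetP /lmulP /=; split.
  move=> [q1 [hq1 ->]].
  have hP : Pset R n (val e *m (q *m q1)).
    by apply: P_mul; [exact: PtP | apply: Q_P; exact: Q_mul].
  exists (toP (val e *m (q *m q1))).
    by exists (q *m q1); split; [exact: Q_mul | rewrite toP_val].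
  by rewrite toP_val // ee' !mulmxA.
move=> [e2 [q2 [hq2 e2E]] ->]; exists (q' *m q2); split; first exact: Q_mul.
by rewrite e2E ee' -!mulmxA (mulmxA q) qq' mul1mx.
Qed.

Lemma polar_eq (r r' : SOt R n) (e e' : Pt R n) q : Qset R n q ->
  val r' *m (val r)^T *m val e *m q = val e' -> qO (r', qP e') = qO (r, qP e).
Proof.
move=> hq he; apply: qpi_eq; first exact: orb_clos.
have [q' [hq' qq']] := Q_inv hq.
set k := val r' *m (val r)^T.
have kS : SOset R n k by apply: SO_mul; [exact: SOtP | apply: SO_tr; exact: SOtP].
have kP : Pset R n k.
  apply: (P_cancel _ (PtP e)); last exact: detSO.
  have -> : k *m val e = val e' *m q' by rewrite -he -mulmxA qq' mulmx1.
  by apply: P_mul; [exact: PtP | exact: Q_P].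
exists k; split => //=.
  by rewrite /k -mulmxA SO_trK ?mulmx1 //; exact: SOtP.
exact: (coset_lmul kP hq (esym he)).
Qed.

Lemma Mprop (rh : SOt R n) (et : Pt R n) (g : SLt R n) :
  val g = invmx (val rh) *m val et -> Mmap (qO (rh, qP et)) = qSL g.
Proof.
move=> hg; rewrite /Mmap.
set x := rO _.
have hx : polar_orbit R n (rh, qP et) x.
  by apply: qpi_inv; [exact: orb_refl | rewrite /x qpi_rep].
move: hx => [k [hk e1 e2]].
set e' := rP x.2.
have he' : cosetP R n e' = val x.2 by rewrite /e' rep_cls.
have : cosetP R n e' e' by exact: Pc_refl.
rewrite he' e2 /= => -[e2' [q [hq e2q]] ee].
have val_eq : (val x.1)^T *m val e' = val g *m q.
  rewrite ee e2q e1 hg SO_inv; last exact: SOtP.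
  rewrite trmx_mul -!mulmxA (mulmxA k^T) SO_trK ?mul1mx //; by case: hk.
have hS : SLset R n (val g *m q).
  by rewrite /SLset /= det_mulmx (detQ hq) mulr1; exact: SLtP.
transitivity (qSL (toSL (val g *m q))); first by congr (qSL (toSL _)); exact: val_eq.
apply: qpi_eq; first exact: SL_clos.
by exists q; split => //; rewrite toSL_val.
Qed.


Lemma rhog_SOv s (g : M) : ha s (uu g) != 0 -> val (toSO (rhog s g)) = rhog s g.
Proof. by move=> a0; rewrite toSO_val //; exact: rhog_SO. Qed.

Lemma rhog_Pv s (g : SLt R n) : s ^+ 2 = 1 -> ha s (uu (val g)) != 0 ->
  val (toP (rhog s (val g) *m val g)) = rhog s (val g) *m val g.
Proof. by move=> s2 a0; rewrite toP_val //; apply: rhog_P => //; exact: SLtP. Qed.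

Lemma Phi_eq s s' (g g' : SLt R n) q : Qset R n q -> val g' = val g *m q ->
  s ^+ 2 = 1 -> ha s (uu (val g)) != 0 ->
  s' ^+ 2 = 1 -> ha s' (uu (val g')) != 0 ->
  Phi s' (val g') = Phi s (val g).
Proof.
move=> hq gq s2 a0 s2' a0'; rewrite /Phi; apply: polar_eq hq _.
rewrite rhog_SOv // rhog_SOv // rhog_Pv // rhog_Pv //.
set r := rhog s (val g); set r' := rhog s' (val g').
have hr : r^T *m r = 1%:M by apply: SO_trK; exact: rhog_SO.
by rewrite -(mulmxA r') (mulmxA r^T) hr mul1mx -mulmxA gq.
Qed.

Lemma ha_sgn0 (g : SLt R n) : ha (sgn (val g)) (uu (val g)) != 0.
Proof. by rewrite gt_eqF // ha_sgn //; exact: SLtP. Qed.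

Lemma Minv_any s (g : SLt R n) : s ^+ 2 = 1 -> ha s (uu (val g)) != 0 ->
  Minv (qSL g) = Phi s (val g).
Proof.
move=> s2 a0; rewrite /Minv.
set g' := rSL _.
have : cosetSL R n g g' by apply: qpi_inv; [exact: SL_refl | rewrite /g' qpi_rep].
move=> [q [hq gq]].
by apply: (Phi_eq hq gq) => //; [exact: sgn2 | exact: ha_sgn0].
Qed.

Lemma MinvK : cancel Minv Mmap.
Proof.
move=> Y; rewrite /Minv /Phi.
set g := rSL Y; set s := sgn (val g).
have s2 : s ^+ 2 = 1 by exact: sgn2.
have a0 : ha s (uu (val g)) != 0 by exact: ha_sgn0.
rewrite (Mprop (g := g)); first by rewrite /g qpi_rep.
rewrite rhog_SOv // rhog_Pv // SO_inv; last exact: rhog_SO.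
by rewrite mulmxA SO_trK ?mul1mx //; exact: rhog_SO.
Qed.

Lemma MK : cancel Mmap Minv.
Proof.
move=> X; rewrite /Mmap.
set x := rO X; set e := rP x.2.
have hS : SLset R n ((val x.1)^T *m val e).
  by rewrite /SLset /= det_mulmx det_tr detSO ?detP ?mulr1 //; [exact: PtP | exact: SOtP].
set gS := toSL _.
have vg : val gS = (val x.1)^T *m val e by rewrite toSL_val.
rewrite (Minv_any (sgn2 _) (ha_sgn0 gS)) /Phi.
transitivity (qO (x.1, qP e)).
  apply: (polar_eq (Q_1 R n)); rewrite mulmx1.
  by rewrite rhog_SOv ?ha_sgn0 // rhog_Pv ?sgn2 ?ha_sgn0 // vg mulmxA.
by rewrite /e qpi_rep -surjective_pairing /x qpi_rep.
Qed.

End Main.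

Section Cont.
Context (R : realType) (n : nat) {T : topologicalType} (x : T).
Local Notation M := 'M[R]_(n + 1).
Local Notation cnt := (cnt x).
Local Notation catm := (catm x).

Lemma catm_vv (F : T -> M) : catm F -> catm (fun t => vv (F t)).
Proof. by move=> cF; apply: catm_row; apply: catm_adj. Qed.

Lemma cat_nn (F : T -> M) : catm F -> cnt (fun t => nn (F t)).
Proof.
move=> cF; apply: catS; apply: (catmE x (fun t => vv (F t) *m (vv (F t))^T) 0 0).
by apply: catm_mul; [exact: catm_vv | apply: catm_tr; exact: catm_vv].
Qed.

Lemma catm_uu (F : T -> M) : catm F -> \det (F x) = 1 -> catm (fun t => uu (F t)).
Proof.
move=> cF dF; apply: catm_scale; last exact: catm_vv.
apply: catV; last exact: cat_nn.
by rewrite /nn gt_eqF // sqrtr_gt0 vv_pos.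
Qed.

Lemma catm_hw s (F : T -> M) : catm F -> \det (F x) = 1 -> catm (fun t => hw s (uu (F t))).
Proof.
move=> cF dF; rewrite /hw; apply: catm_add; first exact: catm_uu.
by apply: catm_opp; exact: catm_cst.
Qed.

Lemma cat_ha s (F : T -> M) : catm F -> \det (F x) = 1 -> cnt (fun t => ha s (uu (F t))).
Proof.
move=> cF dF; rewrite /ha.
apply: (catmE x (fun t => hw s (uu (F t)) *m (hw s (uu (F t)))^T) 0 0).
by apply: catm_mul; [exact: catm_hw | apply: catm_tr; exact: catm_hw].
Qed.

Lemma catm_hH s (F : T -> M) : catm F -> \det (F x) = 1 -> ha s (uu (F x)) != 0 ->
  catm (fun t => hH s (uu (F t))).
Proof.
move=> cF dF a0; rewrite /hH; apply: catm_add; first exact: catm_cst.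
apply: catm_opp; apply: catm_scale.
  by apply: catM; [exact: catC | apply: catV => //; exact: cat_ha].
by apply: catm_mul; [apply: catm_tr; exact: catm_hw | exact: catm_hw].
Qed.

Lemma catm_rhog s (F : T -> M) : catm F -> \det (F x) = 1 -> ha s (uu (F x)) != 0 ->
  catm (fun t => rhog s (F t)).
Proof.
move=> cF dF a0; rewrite /rhog /rho; apply: catm_mul; last exact: catm_hH.
rewrite /Dm; apply: catm_diag; apply: catmP => i j.
have -> : (fun t => (\row_j0 (if j0 == lst n then \det (hH s (uu (F t))) else 1)) i j)
   = fun t => if j == lst n then \det (hH s (uu (F t))) else 1.
  by apply/funext => t; rewrite mxE.
case: (j == lst n); last exact: catC.
by apply: cat_det; exact: catm_hH.
Qed.

End Cont.

Section Top.
Context (R : realType) (n : nat).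
Local Notation M := 'M[R]_(n + 1).

Lemma val_cont (A : set M) : continuous (fun a : set_type A => val a).
Proof. exact: initial_continuous. Qed.

Lemma cvg_into (A : set M) (d : set_type A) {T : topologicalType} (f : T -> M) (x : T) :
  f @ x --> f x -> (\forall t \near x, A (f t)) ->
  (fun t => sub_or d (f t)) @ x --> sub_or d (f x).
Proof.
move=> cf nA U /= hU; rewrite nbhsE in hU; case: hU => B [[C oC <-] Bx] BU.
have Ax : A (f x) by exact: nbhs_singleton nA.
have Cx : C (f x) by move: Bx; rewrite /= set_valE /= sub_orE.
have nC : \forall t \near x, C (f t).
  by apply: cf; apply: open_nbhs_nbhs; split.
suff : \forall t \near x, U (sub_or d (f t)) by [].
near=> t; apply: BU => /=; rewrite set_valE /= sub_orE; by near: t.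
Unshelve. all: by end_near. Qed.


Lemma cvg_pair_pt {T U V : topologicalType} (f : T -> U) (g : T -> V) (x : T) :
  f @ x --> f x -> g @ x --> g x -> (fun t => (f t, g t)) @ x --> (f x, g x).
Proof.
move=> cf cg P [[A B] /= [hA hB] sub].
suff : \forall t \near x, P (f t, g t) by [].
near=> t; apply: (sub (f t, g t)); split => /=; near: t; [exact: cf | exact: cg].
Unshelve. all: by end_near. Qed.

Local Notation qSL := (qpi (@cosetSL R n)).
Local Notation qP := (qpi (@cosetP R n)).
Local Notation qO := (qpi (@polar_orbit R n)).

Lemma Minv_cont : continuous (@Minv R n).
Proof.
apply: quot_contP => g0.
set s0 := sgn (val g0).
have a0 : ha s0 (uu (val g0)) != 0 := ha_sgn0 g0.
have cv : catm g0 (fun g : SLt R n => val g) by move=> U; apply: val_cont.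
have dg0 : \det (val g0) = 1 := SLtP g0.
have cha : cnt g0 (fun g : SLt R n => ha s0 (uu (val g))) by apply: cat_ha cv dg0.
have nha : \forall g \near g0, 0 < ha s0 (uu (val g)).
  have hh : 0 < ha s0 (uu (val g0)) by rewrite ha_sgn.
  exact: (@cvgr_gt _ _ _ _ _ _ cha 0 hh).
have eqn : {near g0, (fun g : SLt R n => Phi s0 (val g)) =1 (@Minv R n \o qSL)}.
  near=> g; rewrite /= (Minv_any (s:=s0) (g:=g)) ?sgn2 //; rewrite gt_eqF //; by near: g.
have e0 : Minv (qSL g0) = Phi s0 (val g0) by rewrite (Minv_any (s:=s0) (g:=g0)) ?sgn2.
rewrite /continuous_at /= e0.
apply: cvg_trans (near_eq_cvg eqn) _.
have crho : catm g0 (fun g : SLt R n => rhog s0 (val g)) by apply: catm_rhog cv dg0 a0.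
have hp : (fun g : SLt R n => (toSO (rhog s0 (val g)), qP (toP (rhog s0 (val g) *m val g)))) @ g0
   --> (toSO (rhog s0 (val g0)), qP (toP (rhog s0 (val g0) *m val g0))).
  apply: cvg_pair_pt.
    apply: cvg_into => //; near=> g; apply: rhog_SO; rewrite gt_eqF //; by near: g.
  apply: (continuous_comp (f := fun g : SLt R n => toP (rhog s0 (val g) *m val g))); last exact: qpi_cont.
  apply: cvg_into; first exact: (catm_mul g0 _ _ crho cv).
  near=> g; apply: rhog_P; [exact: SLtP | exact: sgn2 | rewrite gt_eqF //; by near: g].
exact: (continuous_comp hp (@qpi_cont _ _ _)).
Unshelve. all: by end_near. Qed.


Local Notation rP := (@rep _ (@cosetP R n)).

Definition Hm (p : SOt R n * Pt R n) : Xspace R n :=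
  qSL (toSL ((val p.1)^T *m val p.2)).

Lemma SL_of (r : SOt R n) (e : Pt R n) : SLset R n ((val r)^T *m val e).
Proof. by rewrite /SLset /= det_mulmx det_tr detSO ?detP ?mulr1 //; [exact: PtP | exact: SOtP]. Qed.

Lemma HmE r e : Mmap (qO (r, qP e)) = Hm (r, e).
Proof.
apply: Mprop => /=; rewrite toSL_val; last exact: SL_of.
by have := SO_inv (SOtP r) => /= ->.
Qed.

Lemma Hm_cont : continuous Hm.
Proof.
move=> p; apply: (continuous_comp (f := fun p : SOt R n * Pt R n => toSL ((val p.1)^T *m val p.2))); last exact: qpi_cont.
apply: cvg_into; last by near=> q; exact: SL_of.
apply: (catm_mul p (fun q : SOt R n * Pt R n => (val q.1)^T) (fun q : SOt R n * Pt R n => val q.2)).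
  apply: (catm_tr p (fun q : SOt R n * Pt R n => val q.1)).
  apply: (continuous_comp (f := fst)); first exact: cvg_fst.
  by move=> U; apply: val_cont.
apply: (continuous_comp (f := snd)); first exact: cvg_snd.
by move=> U; apply: val_cont.
Unshelve. all: by end_near. Qed.

Definition rq (q : M) (e : Pt R n) : Pt R n := toP (val e *m q).

Lemma rq_cont q : Qset R n q -> continuous (rq q).
Proof.
move=> hq e; apply: cvg_into; last first.
  by near=> f; apply: P_mul; [exact: PtP | exact: Q_P].
apply: (catm_mul e (fun f : Pt R n => val f) (fun=> q)); last exact: catm_cst.
by move=> U; apply: val_cont.
Unshelve. all: by end_near. Qed.

Lemma qP_open (B : set (Pt R n)) : open B -> open (qP @` B).
Proof.
move=> oB; change (open (qP @^-1` (qP @` B))).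
have -> : qP @^-1` (qP @` B) = \bigcup_(q in Qset R n) (rq q @^-1` B).
  apply/seteqP; split.
    move=> e /= [e2 Be2 qe].
    have := qpi_inv (@Pc_refl R n) (esym qe) => -[q [hq he]].
    exists q => //=; have -> : rq q e = e2.
      apply: val_inj; rewrite /rq toP_val; first exact: (esym he).
      by apply: P_mul; [exact: PtP | exact: Q_P].
    done.
  move=> e [q hq /= Bq]; exists (rq q e) => //.
  apply: qpi_eq; first exact: Pc_clos.
  exists q; split => //; rewrite /rq toP_val //; apply: P_mul; [exact: PtP | exact: Q_P].
apply: bigcup_open => q hq; move/continuousP: (rq_cont hq); exact.
Qed.

Lemma Mmap_cont : continuous (@Mmap R n).
Proof.
apply: quot_contP => -[r0 c0] A hA.
set e0 := rP c0.
have c0E : qP e0 = c0 by rewrite /e0 qpi_rep.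
have hA' : nbhs (Hm (r0, e0)) A by rewrite -HmE c0E.
have := Hm_cont hA' => -[[B1 B2] /= [hB1 hB2] sub].
rewrite nbhsE in hB2; case: hB2 => B2' [oB2' B2'e0] B2'B2.
suff : nbhs (r0, c0) (B1 `*` (qP @` B2')).
  apply: filterS => -[r c] [/= Br [e2 Be2 <-]].
  by rewrite /= HmE; apply: (sub (r, e2)); split => //; exact: B2'B2.
exists (B1, qP @` B2'); first split => //.
  by apply: open_nbhs_nbhs; split; [exact: qP_open | exists e0].
done.
Qed.

End Top.

Unset Implicit Arguments.
Set Strict Implicit.

Theorem proposition2p2 (R : realType) (n : nat) :
  exists (M : Xpolar R n -> Xspace R n) (Minv : Xspace R n -> Xpolar R n),
    [/\ (forall (rho : SOt R n) (eta : Pt R n) (g : SLt R n),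
           val g = invmx (val rho) *m val eta ->
           M (qpi (@polar_orbit R n) (rho, qpi (@cosetP R n) eta))
             = qpi (@cosetSL R n) g),
        cancel M Minv, cancel Minv M, continuous M & continuous Minv].
Proof.
exists (@Mmap R n), (@Minv R n); split.
- by move=> rho eta g hg; exact: Mprop.
- exact: MK.
- exact: MinvK.
- exact: Mmap_cont.
- exact: Minv_cont.
Qed.
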